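(* Let $f:[0,\infty)\to\mathbb{R}$ be a continuous superquadratic function and let $A\in\mathbb{M}_n^+$ be positive semidefinite. Then for every orthonormal basis $\{\mathbf{u}_1,\dots,\mathbf{u}_n\}$ of $\mathbb{C}^n$, $$\sum_{j=1}^n f(\langle A\mathbf{u}_j,\mathbf{u}_j\rangle)+\sum_{j=1}^n\big\langle f(|A-\langle A\mathbf{u}_j,\mathbf{u}_j\rangle I|)\mathbf{u}_j,\mathbf{u}_j\big\rangle\le \mathrm{Tr}\, f(A).$$ Moreover, equality holds if $f$ is non-negative and $\mathbf{u}_1,\dots,\mathbf{u}_n$ are eigenvectors of $A$.
   Context: A function $f:[0,\infty)\to\mathbb{R}$ is called superquadratic if for every $s\ge 0$ there exists a constant $C_s\in\mathbb{R}$ such that $f(t)\ge f(s)+C_s(t-s)+f(|t-s|)$ for all $t\ge0$. $f(X)$ is defined by the spectral functional calculus, $|X|=(X^*X)^{1/2}$, $\langle\cdot,\cdot\rangle$ is the standard inner product on $\mathbb{C}^n$, and $\mathrm{Tr}$ is the usual matrix trace. *)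

(* Defs.v *)
(* complex matrices over a numClosedFieldType C
   (an algebraically closed field with conjugation and the partial order
   whose nonnegative elements are the nonnegative reals, e.g. algC). *)
From HB Require Import structures.
From mathcomp Require Import all_boot all_order all_algebra.
Set Implicit Arguments. Unset Strict Implicit. Unset Printing Implicit Defensive.
Import Order.TTheory GRing.Theory Num.Theory Num.Def.
Local Open Scope ring_scope.

Definition adjmx {C : numClosedFieldType} m n (M : 'M[C]_(m, n)) : 'M[C]_(n, m) :=
  (map_mx conjC M)^T.

Definition inner {C : numClosedFieldType} n (x y : 'cV[C]_n) : C :=
  (adjmx y *m x) 0 0.

Definition psdmx {C : numClosedFieldType} n (A : 'M[C]_n) : Prop :=
  A \is hermsymmx /\ forall x : 'cV[C]_n, 0 <= inner (A *m x) x.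

(* spectral functional calculus g(A) for a normal matrix A, via the unitary
   diagonalisation A = P^-1 diag(sp) P provided by mathcomp's spectral.v *)
Definition mxfun {C : numClosedFieldType} n (g : C -> C) (A : 'M[C]_n) : 'M[C]_n :=
  invmx (spectralmx A) *m diag_mx (map_mx g (spectral_diag A)) *m spectralmx A.

Definition mxabs {C : numClosedFieldType} n (X : 'M[C]_n) : 'M[C]_n :=
  mxfun (fun x : C => sqrtC x) (adjmx X *m X).

(* f : [0,oo) -> R, real-valued on [0,oo) *)
Definition real_on_nonneg {C : numClosedFieldType} (f : C -> C) : Prop :=
  forall t : C, 0 <= t -> f t \is Num.real.

Definition continuous_on_nonneg {C : numClosedFieldType} (f : C -> C) : Prop :=
  forall x : C, 0 <= x -> forall eps : C, 0 < eps ->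
    exists2 delta : C, 0 < delta &
      forall y : C, 0 <= y -> `|y - x| < delta -> `|f y - f x| < eps.

Definition superquadratic {C : numClosedFieldType} (f : C -> C) : Prop :=
  forall s : C, 0 <= s -> exists2 Cs : C, Cs \is Num.real &
    forall t : C, 0 <= t -> f s + Cs * (t - s) + f `|t - s| <= f t.

(* orthonormal family of n vectors in C^n (hence an orthonormal basis) *)
Definition orthonormal_basis {C : numClosedFieldType} n (u : 'I_n -> 'cV[C]_n) : Prop :=
  forall i j : 'I_n, inner (u i) (u j) = (i == j)%:R.

(* Main.v *)
Require Import Defs.
From HB Require Import structures.
From mathcomp Require Import all_boot all_order all_algebra.
From mathcomp Require Import ring.
Import Order.TTheory GRing.Theory Num.Theory Num.Def.
Local Open Scope ring_scope.

Lemma interp_exists (C : fieldType) (g : C -> C) (s : seq C) :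
  exists p : {poly C}, forall x, x \in s -> p.[x] = g x.
Proof.
elim: s => [|y s [p Hp]]; first by exists 0.
have [ys|yNs] := boolP (y \in s).
  by exists p => x; rewrite inE => /orP[/eqP->|]; [apply: Hp|apply: Hp].
pose q := \prod_(z <- s) ('X - z%:P).
have qy : q.[y] != 0.
  rewrite horner_prod prodf_seq_neq0; apply/allP => z zs /=.
  by rewrite hornerXsubC subr_eq0; apply: contraNneq yNs => ->.
have q0 : forall x, x \in s -> q.[x] = 0.
  move=> x xs; rewrite horner_prod (big_rem x) //= hornerXsubC subrr mul0r //.
exists (p + ((g y - p.[y]) / q.[y]) *: q) => x; rewrite inE => /orP[/eqP->|xs].
  by rewrite hornerD hornerZ divfK // addrC subrK.
by rewrite hornerD hornerZ (q0 x xs) mulr0 addr0 Hp.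
Qed.

Lemma mxfun_conj (C : numClosedFieldType) n (g : C -> C) (M Q : 'M[C]_n.+1) (e : 'rV[C]_n.+1) :
  M \is normalmx -> Q \in unitmx -> M = invmx Q *m diag_mx e *m Q ->
  mxfun g M = invmx Q *m diag_mx (map_mx g e) *m Q.
Proof.
move=> /orthomx_spectralP HM Qu HQ.
set P := spectralmx M in HM *; set d := spectral_diag M in HM *.
have [p Hp] := @interp_exists C g ([seq e 0 i | i <- enum 'I_n.+1] ++ [seq d 0 i | i <- enum 'I_n.+1]).
have Hd : map_mx g d = map_mx (horner p) d.
  by apply/matrixP => i j; rewrite !mxE Hp // mem_cat; apply/orP; right; rewrite (ord1 i); apply/mapP; exists j; rewrite ?mem_enum.
have He : map_mx g e = map_mx (horner p) e.
  by apply/matrixP => i j; rewrite !mxE Hp // mem_cat; apply/orP; left; rewrite (ord1 i); apply/mapP; exists j; rewrite ?mem_enum.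
rewrite /mxfun -/P -/d Hd He -!horner_mx_diag -!horner_mx_uconjC //.
  by rewrite -HM -HQ.
exact: spectral_unit.
Qed.

Local Open Scope sesquilinear_scope.

Lemma adjmxE (C : numClosedFieldType) m n (M : 'M[C]_(m, n)) : adjmx M = M ^t*.
Proof. by rewrite /adjmx map_trmx. Qed.

Lemma inner_diag (C : numClosedFieldType) n (P : 'M[C]_n) (h : 'rV[C]_n) (u : 'cV[C]_n) :
  P \is unitarymx ->
  inner (invmx P *m diag_mx h *m P *m u) u =
  \sum_k h 0 k * ((P *m u) k 0 * ((P *m u) k 0)^*).
Proof.
move=> Pu; rewrite /inner invmx_unitary // !mulmxA.
have -> : adjmx u *m P ^t* = adjmx (P *m u).
  by rewrite !adjmxE trmx_mul map_mxM.
rewrite -mulmxA; set v := P *m u; rewrite mxE; apply: eq_bigr => k _.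
rewrite mul_mx_diag mxE /adjmx !mxE; ring.
Qed.

Section Cj.
Variable C : numClosedFieldType.
Variable n : nat.
Implicit Types (P : 'M[C]_n) (e : 'rV[C]_n).

Definition cj P e := invmx P *m diag_mx e *m P.

Lemma cjM P e1 e2 : P \in unitmx ->
  cj P e1 *m cj P e2 = cj P (\row_k (e1 0 k * e2 0 k)).
Proof.
move=> Pu; rewrite /cj !mulmxA mulmxK // -[invmx P *m _ *m diag_mx e2]mulmxA.
congr (_ *m _ *m _).
apply/matrixP => i j; rewrite mul_diag_mx !mxE.
by case: eqP => [->|]; rewrite ?mulr1n ?mulr0n ?mulr0.
Qed.

Lemma cj_adj P e : P \is unitarymx -> adjmx (cj P e) = cj P (map_mx conjC e).
Proof.
move=> Pu; rewrite /cj !adjmxE invmx_unitary // !trmx_mul !map_mxM trmxCK.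
rewrite tr_diag_mx map_diag_mx mulmxA; congr (_ *m _ *m _).
Qed.

Lemma cj_sub P e a : P \in unitmx ->
  cj P e - a%:M = cj P (\row_k (e 0 k - a)).
Proof.
move=> Pu; have -> : a%:M = cj P (const_mx a).
  by rewrite /cj diag_const_mx mul_mx_scalar -scalemxAl mulVmx // scalemx1.
rewrite /cj -mulmxBl -mulmxBr; congr (_ *m _ *m _).
apply/matrixP => i j; rewrite !mxE.
by case: eqP => [->|]; rewrite ?mulr1n ?mulr0n ?subr0.
Qed.

Lemma cj_normal P e : P \is unitarymx -> cj P e \is normalmx.
Proof. by move=> Pu; apply/orthomx_spectral_subproof; exists (P, e). Qed.

Lemma cj_tr P e : P \in unitmx -> \tr (cj P e) = \sum_k e 0 k.
Proof.
by move=> Pu; rewrite /cj mxtrace_mulC mulmxA mulmxV // mul1mx mxtrace_diag.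
Qed.
End Cj.
Arguments cj {C n}.
Arguments cjM {C n}.
Arguments cj_adj {C n}.
Arguments cj_sub {C n}.
Arguments cj_normal {C n}.
Arguments cj_tr {C n}.

Lemma mxabs_cj (C : numClosedFieldType) n (P : 'M[C]_n.+1) e a :
  P \is unitarymx ->
  mxabs (cj P e - a%:M) = cj P (\row_k `|e 0 k - a|).
Proof.
move=> Pu; have Pun := unitarymx_unit Pu.
rewrite cj_sub // /mxabs cj_adj // cjM //.
rewrite (@mxfun_conj C n _ _ P _ (cj_normal _ _ Pu) Pun (erefl _)); congr (_ *m diag_mx _ *m _).
apply/matrixP => i k; rewrite !mxE -normCKC sqrCK //.
Qed.

Lemma mxfun_cj (C : numClosedFieldType) n (g : C -> C) (P : 'M[C]_n.+1) e :
  P \is unitarymx -> mxfun g (cj P e) = cj P (map_mx g e).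
Proof.
move=> Pu; exact: (@mxfun_conj C n _ _ P _ (cj_normal _ _ Pu) (unitarymx_unit Pu) (erefl _)).
Qed.

Local Close Scope sesquilinear_scope.

Theorem proposition3p3 (C : numClosedFieldType) (n : nat) (f : C -> C)
  (A : 'M[C]_n) (u : 'I_n -> 'cV[C]_n) :
  real_on_nonneg f -> continuous_on_nonneg f -> superquadratic f ->
  psdmx A -> orthonormal_basis u ->
  (\sum_(j < n) f (inner (A *m u j) (u j))
     + \sum_(j < n) inner (mxfun f (mxabs (A - (inner (A *m u j) (u j))%:M)) *m u j) (u j)
   <= \tr (mxfun f A))
  /\
  ((forall t : C, 0 <= t -> 0 <= f t) ->
   (forall j : 'I_n, exists l : C, A *m u j = l *: u j) ->
   \sum_(j < n) f (inner (A *m u j) (u j))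
     + \sum_(j < n) inner (mxfun f (mxabs (A - (inner (A *m u j) (u j))%:M)) *m u j) (u j)
   = \tr (mxfun f A)).
Proof.
case: n A u => [|n] A u.
  move=> _ _ _ _ _; rewrite !big_ord0 addr0 /mxtrace big_ord0; split => //.
move=> Hreal _ Hsq [Aherm Apsd] Hon.
have Anorm := hermitian_normalmx Aherm.
have Pu := spectral_unitarymx A; have Pun := spectral_unit A.
set P := spectralmx A in Pu Pun.
have HA : A = cj P (spectral_diag A) by apply/orthomx_spectralP.
set d := spectral_diag A in HA.
pose w (j k : 'I_n.+1) := (P *m u j) k 0 * ((P *m u j) k 0)^*.
have w_ge0 j k : 0 <= w j k by apply: mul_conjC_ge0.
have hinner j h : inner (cj P h *m u j) (u j) = \sum_k h 0 k * w j k.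
  exact: inner_diag.
have hsum1 j : \sum_k w j k = 1.
  have := hinner j (const_mx 1).
  have -> : cj P (const_mx 1) = 1%:M.
    by rewrite /cj diag_const_mx mulmx1 mulVmx.
  rewrite mul1mx Hon eqxx /= => H; rewrite -[RHS]/(true%:R) H.
  by apply: eq_bigr => k _; rewrite mxE mul1r.
have ha j : inner (A *m u j) (u j) = \sum_k d 0 k * w j k by rewrite HA hinner.
have dge0 k : 0 <= d 0 k.
  pose x := invmx P *m delta_mx k (0 : 'I_1).
  have := Apsd x; rewrite HA (@inner_diag C n.+1 P d x Pu).
  rewrite /x mulKVmx // (bigD1 k) //= big1 ?addr0.
    by rewrite mxE !eqxx /= conjC1 !mulr1.
  by move=> l /negPf lk; rewrite mxE lk /= mul0r mulr0.
have hwj k : \sum_j w j k = 1.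
  pose U : 'M[C]_n.+1 := \matrix_(i, j) u j i 0.
  have UU : adjmx U *m U = 1%:M.
    apply/matrixP => i j; rewrite !mxE eq_sym -Hon /inner !mxE.
    by apply: eq_bigr => l _; rewrite /adjmx !mxE.
  have UU' : U *m adjmx U = 1%:M by apply: mulmx1C.
  have : (P *m U *m adjmx (P *m U)) k k = 1.
    rewrite !adjmxE trmx_mul map_mxM -adjmxE mulmxA -(mulmxA P) UU' mulmx1.
    by rewrite (unitarymxP Pu) mxE eqxx.
  move=> <-; rewrite mxE; apply: eq_bigr => j _.
  rewrite /w /adjmx !mxE; congr (_ * _^*); apply: eq_bigr => l _; rewrite !mxE //.
have htr : \tr (mxfun f A) = \sum_j \sum_k f (d 0 k) * w j k.
  rewrite HA mxfun_cj // cj_tr // exchange_big /=; apply: eq_bigr => k _.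
  by rewrite -mulr_sumr hwj mulr1 mxE.
have hfabs j a : inner (mxfun f (mxabs (A - a%:M)) *m u j) (u j)
    = \sum_k f `|d 0 k - a| * w j k.
  by rewrite HA mxabs_cj // mxfun_cj // hinner; apply: eq_bigr => k _; rewrite !mxE.
rewrite htr -big_split /=.
have key j : f (inner (A *m u j) (u j)) + \sum_k f `|d 0 k - inner (A *m u j) (u j)| * w j k
    <= \sum_k f (d 0 k) * w j k.
  set a := inner (A *m u j) (u j).
  have a0 : 0 <= a by apply: Apsd.
  have [Cs Csr HC] := Hsq a a0.
  have E : \sum_k (f a + Cs * (d 0 k - a) + f `|d 0 k - a|) * w j k
      = f a + \sum_k f `|d 0 k - a| * w j k.
    have -> : \sum_k (f a + Cs * (d 0 k - a) + f `|d 0 k - a|) * w j k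
      = \sum_k (f a * w j k + Cs * (d 0 k * w j k) - Cs * a * w j k
                  + f `|d 0 k - a| * w j k).
      by apply: eq_bigr => k _; ring.
    rewrite big_split /= sumrB big_split /= -!mulr_sumr -ha hsum1 -/a.
    ring.
  rewrite -E; apply: ler_sum => k _; apply: ler_wpM2r => //.
  exact: HC.
split.
  by apply: ler_sum => j _; rewrite hfabs; apply: key.
move=> fpos Heig.
have f0 : f 0 = 0.
  have [Cs _ HC] := Hsq 0 (lexx 0).
  have := HC 0 (lexx 0); rewrite subrr mulr0 addr0 normr0 => H.
  apply/eqP; rewrite eq_le fpos ?lexx // andbT.
  by move: H; rewrite -{3}[f 0]addr0 lerD2l.
have DP : diag_mx d *m P = P *m A by rewrite HA /cj !mulmxA mulmxV // mul1mx.
apply: eq_bigr => j _; rewrite hfabs.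
have [l Hl] := Heig j.
have al : inner (A *m u j) (u j) = l.
  by rewrite Hl /inner -scalemxAr mxE; have := Hon j j; rewrite /inner eqxx => ->; rewrite mulr1.
rewrite al.
have Hk k : (P *m u j) k 0 = 0 \/ d 0 k = l.
  have : diag_mx d *m (P *m u j) = l *: (P *m u j).
    by rewrite mulmxA DP -mulmxA Hl scalemxAr.
  move/matrixP/(_ k 0); rewrite mul_diag_mx !mxE => /eqP.
  rewrite -subr_eq0 -mulrBl mulf_eq0 subr_eq0 => /orP[/eqP|/eqP]; by [right|left].
have wk k : w j k = 0 \/ d 0 k = l.
  by case: (Hk k) => [H|H]; [left; rewrite /w H mul0r|right].
rewrite big1 ?addr0; last first.
  by move=> k _; case: (wk k) => ->; rewrite ?mulr0 // subrr normr0 f0 mul0r.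
rewrite (eq_bigr (fun k => f l * w j k)); last first.
  by move=> k _; case: (wk k) => ->; rewrite ?mulr0.
by rewrite -mulr_sumr hsum1 mulr1.
Qed.
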